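(* For every integer $n\ge0$ there are constants $C_n$ and $D_n$ (independent of $s$) such that for all real $s>-1$ \[ \int_0^1 P_{n,n}(x)x^s\,dx=C_n\frac{(-s)_n}{(\frac12+\frac s2)_{n+1}},\qquad \int_0^1\bigl[P_{n+1,n}(x)+P_{n,n+1}(x)\bigr]x^s\,dx=D_n\frac{(-s)_n}{(1+\frac s2)_{n+1}}. \]
   Context: Pochhammer symbol: $(a)_0=1$, $(a)_n=a(a+1)\cdots(a+n-1)$. Type II Legendre–Angelesco polynomials: for $n,m\ge0$, $P_{n,m}$ is the unique monic polynomial of degree $n+m$ with $\int_{-1}^0 P_{n,m}(x)x^k\,dx=0$ for $0\le k\le n-1$ and $\int_0^1 P_{n,m}(x)x^k\,dx=0$ for $0\le k\le m-1$. *)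

(* Defs.v *)
From Stdlib Require Import Reals List.
Open Scope R_scope.

Fixpoint poch (a : R) (n : nat) : R :=
  match n with
  | O => 1
  | S k => poch a k * (a + INR k)
  end.

(* A real polynomial is represented by its coefficient list [c0; c1; ...; cd]
   (ascending powers); evaluation by Horner's scheme. *)
Definition peval (p : list R) (x : R) : R :=
  fold_right (fun c acc => c + x * acc) 0 p.

Definition IntegralIs (f : R -> R) (a b L : R) : Prop :=
  exists pr : Riemann_integrable f a b, RiemannInt pr = L.

Definition ImproperIntegralIs (f : R -> R) (a b L : R) : Prop :=
  (forall e, a < e <= b -> inhabited (Riemann_integrable f e b)) /\
  (forall eps, eps > 0 -> exists delta, delta > 0 /\
     forall e, a < e < a + delta -> e <= b ->
       forall pr : Riemann_integrable f e b, Rabs (RiemannInt pr - L) < eps).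

(* p (coefficient list) is the type II Legendre–Angelesco polynomial P_{n,m}:
   monic of degree n+m, orthogonal to x^k on [-1,0] for k < n and
   on [0,1] for k < m. *)
Definition is_LA (n m : nat) (p : list R) : Prop :=
  length p = (n + m + 1)%nat /\
  last p 0 = 1 /\
  (forall k, (k < n)%nat -> IntegralIs (fun x => peval p x * x ^ k) (-1) 0 0) /\
  (forall k, (k < m)%nat -> IntegralIs (fun x => peval p x * x ^ k) 0 1 0).

(* Main.v *)
Require Import Defs.
From Stdlib Require Import Reals List Lia Lra FunctionalExtensionality Classical.
From Coquelicot Require Import Coquelicot.
Open Scope R_scope.
Fixpoint sm (f : nat -> R) (N : nat) : R :=
  match N with O => 0 | S k => sm f k + f k end.
Fixpoint prd (f : nat -> R) (N : nat) : R :=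
  match N with O => 1 | S k => prd f k * f k end.

Lemma sm_ext f g N : (forall i, (i < N)%nat -> f i = g i) -> sm f N = sm g N.
Proof. induction N; simpl; intros H; auto. rewrite IHN by (intros; apply H; lia). rewrite H by lia; auto. Qed.
Lemma prd_ext f g N : (forall i, (i < N)%nat -> f i = g i) -> prd f N = prd g N.
Proof. induction N; simpl; intros H; auto. rewrite IHN by (intros; apply H; lia). rewrite H by lia; auto. Qed.
Lemma sm_plus f g N : sm (fun i => f i + g i) N = sm f N + sm g N.
Proof. induction N; simpl; [ring|rewrite IHN; ring]. Qed.
Lemma sm_minus f g N : sm (fun i => f i - g i) N = sm f N - sm g N.
Proof. induction N; simpl; [ring|rewrite IHN; ring]. Qed.
Lemma sm_mult_r f c N : sm (fun i => f i * c) N = sm f N * c.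
Proof. induction N; simpl; [ring|rewrite IHN; ring]. Qed.
Lemma sm_opp f N : sm (fun i => - f i) N = - sm f N.
Proof. induction N; simpl; [ring|rewrite IHN; ring]. Qed.
Lemma sm_zero f N : (forall i, (i < N)%nat -> f i = 0) -> sm f N = 0.
Proof. intros H. rewrite (sm_ext f (fun _ => 0)) by auto. induction N; simpl; auto. rewrite IHN; [ring|intros; apply H; lia]. Qed.
Lemma sm_shift f N : sm f (S N) = f O + sm (fun i => f (S i)) N.
Proof. induction N. simpl; ring. change (sm f (S (S N))) with (sm f (S N) + f (S N)). rewrite IHN. simpl; ring. Qed.
Lemma sm_extend f L M : (L <= M)%nat -> (forall i, (L <= i)%nat -> f i = 0) -> sm f M = sm f L.
Proof. intros HL H. induction M. replace L with O by lia; auto.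
 destruct (Nat.eq_dec L (S M)). subst; auto. simpl. rewrite IHM by lia. rewrite H by lia. ring. Qed.
Lemma sm_single f N j : (j < N)%nat -> (forall i, (i < N)%nat -> i <> j -> f i = 0) -> sm f N = f j.
Proof. induction N; intros Hj H. lia. simpl. destruct (Nat.eq_dec j N).
 subst. rewrite sm_zero. ring. intros; apply H; lia.
 rewrite IHN by (try lia; intros; apply H; lia). rewrite (H N) by lia. ring. Qed.
Lemma sm_shift_end f N : sm f (S N) = sm f N + f N.
Proof. reflexivity. Qed.
Lemma sm_split2 f N : sm f (2 * N) = sm (fun j => f (2 * j)%nat) N + sm (fun j => f (S (2 * j))) N.
Proof. induction N. simpl; ring. replace (2 * S N)%nat with (S (S (2 * N))) by lia.
 change (sm f (S (S (2 * N)))) with (sm f (2 * N) + f (2 * N)%nat + f (S (2 * N))).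
 rewrite IHN. rewrite !(sm_shift_end (fun j => _)). ring. Qed.

Lemma prd_zero g N j : (j < N)%nat -> g j = 0 -> prd g N = 0.
Proof. induction N; intros Hj Hg. lia. simpl. destruct (Nat.eq_dec j N). subst. rewrite Hg; ring.
 rewrite IHN by (auto; lia). ring. Qed.
Lemma prd_nonzero g N : (forall i, (i < N)%nat -> g i <> 0) -> prd g N <> 0.
Proof. induction N; simpl; intros H. lra. apply Rmult_integral_contrapositive_currified. apply IHN; intros; apply H; lia. apply H; lia. Qed.
Lemma prd_drop g N j : (j < N)%nat -> prd (fun i => if Nat.eqb i j then 1 else g i) N * g j = prd g N.
Proof. induction N; intros Hj. lia. simpl. destruct (Nat.eq_dec j N).
 subst. rewrite Nat.eqb_refl. rewrite (prd_ext _ g). ring. intros i Hi. destruct (Nat.eqb_spec i N); auto; lia.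
 destruct (Nat.eqb_spec N j). lia. rewrite <- IHN by lia. ring. Qed.

Fixpoint ladd (u v : list R) : list R :=
  match u with nil => v | a :: u' => match v with nil => u | b :: v' => (a + b) :: ladd u' v' end end.
Lemma ladd_eval u : forall v x, peval (ladd u v) x = peval u x + peval v x.
Proof. induction u; intros [|b v] x; simpl; try ring. rewrite IHu. ring. Qed.
Lemma ladd_len u : forall v, length (ladd u v) = Nat.max (length u) (length v).
Proof. induction u; intros [|b v]; simpl; auto. Qed.
Lemma scale_eval r q x : peval (map (Rmult r) q) x = r * peval q x.
Proof. induction q; simpl; [ring|rewrite IHq; ring]. Qed.

Definition ispoly (d : nat) (f : R -> R) := exists q, (length q <= d)%nat /\ forall x, f x = peval q x.

Lemma ispoly_ext d f g : (forall x, f x = g x) -> ispoly d f -> ispoly d g.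
Proof. intros H [q [Hq Hf]]. exists q; split; auto. intros; rewrite <- H; auto. Qed.
Lemma ispoly_mono d d' f : (d <= d')%nat -> ispoly d f -> ispoly d' f.
Proof. intros H [q [Hq Hf]]. exists q; split; auto; lia. Qed.
Lemma ispoly_plus d f g : ispoly d f -> ispoly d g -> ispoly d (fun x => f x + g x).
Proof. intros [q [Hq Hf]] [r [Hr Hg]]. exists (ladd q r); split. rewrite ladd_len; lia.
 intros; rewrite ladd_eval, Hf, Hg; auto. Qed.
Lemma ispoly_scal d c f : ispoly d f -> ispoly d (fun x => c * f x).
Proof. intros [q [Hq Hf]]. exists (map (Rmult c) q); split. rewrite length_map; auto.
 intros; rewrite scale_eval, Hf; auto. Qed.
Lemma ispoly_zero d : ispoly d (fun _ => 0).
Proof. exists nil; split; simpl; auto; lia. Qed.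
Lemma ispoly_const c : ispoly 1 (fun _ => c).
Proof. exists (c :: nil); split; simpl; auto. intros; ring. Qed.
Lemma ispoly_mul_lin d f a : ispoly d f -> ispoly (S d) (fun x => f x * (x + a)).
Proof. intros [q [Hq Hf]]. exists (ladd (map (Rmult a) q) (0 :: q)); split.
 rewrite ladd_len, length_map; simpl; lia.
 intros; rewrite ladd_eval, scale_eval, Hf; simpl; ring. Qed.
Lemma ispoly_sm d F N : (forall j, (j < N)%nat -> ispoly d (F j)) -> ispoly d (fun x => sm (fun j => F j x) N).
Proof. induction N; intros H; simpl. apply ispoly_zero. apply ispoly_plus. apply IHN; intros; apply H; lia. apply H; lia. Qed.
Lemma ispoly_prd a N : ispoly (S N) (fun x => prd (fun i => x + a i) N).
Proof. induction N; simpl. apply ispoly_const. apply ispoly_mul_lin; auto. Qed.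
Lemma ispoly_prd_drop a N j : (j < N)%nat -> ispoly N (fun x => prd (fun i => if Nat.eqb i j then 1 else x + a i) N).
Proof. induction N; intros Hj. lia. simpl. destruct (Nat.eq_dec j N).
 - subst. rewrite Nat.eqb_refl. eapply ispoly_ext; [|apply (ispoly_prd a N)].
   intros x; simpl. rewrite Rmult_1_r. apply prd_ext. intros i Hi. destruct (Nat.eqb_spec i N); auto; lia.
 - destruct (Nat.eqb_spec N j). lia. apply ispoly_mul_lin, IHN; lia. Qed.

Lemma factor q : forall r, exists q', (length q' <= length q - 1)%nat /\
  forall x, peval q x = peval q r + (x - r) * peval q' x.
Proof. induction q as [|a q IH]; intros r. exists nil; split; simpl; auto; intros; ring.
 destruct (IH r) as [q1 [Hl He]]. exists (ladd q (map (Rmult r) q1)); split.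
 rewrite ladd_len, length_map; simpl; lia.
 intros x; simpl. rewrite ladd_eval, scale_eval. rewrite (He x). ring. Qed.

Lemma ispoly_roots d : forall f, ispoly d f -> (forall k, (k < d)%nat -> f (INR k) = 0) -> forall x, f x = 0.
Proof. induction d; intros f [q [Hq Hf]] Hr x.
 - destruct q; simpl in Hq; try lia. rewrite Hf; reflexivity.
 - destruct (factor q (INR d)) as [q' [Hl He]].
   assert (H0 : peval q (INR d) = 0) by (rewrite <- Hf; apply Hr; lia).
   assert (Hg : forall y, peval q' y = 0).
   { apply IHd. exists q'; split; auto; lia.
     intros k Hk. specialize (Hr k ltac:(lia)). rewrite Hf, He, H0 in Hr.
     assert (INR k - INR d <> 0). { assert (INR k < INR d) by (apply lt_INR; lia). lra. }
     rewrite Rplus_0_l in Hr. apply Rmult_integral in Hr. destruct Hr; [lra|]. auto. }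
   rewrite Hf, He, Hg, H0. ring. Qed.
Definition Qf (a e : nat -> R) (N : nat) (s : R) :=
  sm (fun j => e j * prd (fun i => if Nat.eqb i j then 1 else s + a i) N) N.

Lemma Qf_eq a e N s : (forall i, (i < N)%nat -> s + a i <> 0) ->
  Qf a e N s = sm (fun j => e j / (s + a j)) N * prd (fun i => s + a i) N.
Proof. intros H. unfold Qf. rewrite <- sm_mult_r. apply sm_ext. intros j Hj.
 rewrite <- (prd_drop (fun i => s + a i) N j Hj). field. auto. Qed.

Lemma Qf_poly a e N : ispoly N (Qf a e N).
Proof. unfold Qf. apply (ispoly_sm N (fun j x => e j * prd (fun i => if Nat.eqb i j then 1 else x + a i) N)).
 intros j Hj. apply ispoly_scal, ispoly_prd_drop; auto. Qed.

Lemma LemA a N e : (forall i, a i >= 1) -> (forall i j, (i < N)%nat -> (j < N)%nat -> i <> j -> a i <> a j) ->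
  (forall k, (k < N)%nat -> sm (fun j => e j / (INR k + a j)) N = 0) -> forall j, (j < N)%nat -> e j = 0.
Proof. intros Ha Hinj H.
 assert (HQ : forall x, Qf a e N x = 0).
 { apply ispoly_roots with N. apply Qf_poly. intros k Hk. rewrite Qf_eq. rewrite H by auto. ring.
   intros i _. pose proof (pos_INR k). specialize (Ha i). lra. }
 intros j Hj. specialize (HQ (- a j)). unfold Qf in HQ.
 rewrite (sm_single _ N j Hj) in HQ.
 - apply Rmult_integral in HQ. destruct HQ as [HQ|HQ]; auto. exfalso. revert HQ. apply prd_nonzero.
   intros i Hi. destruct (Nat.eqb_spec i j). lra. specialize (Hinj i j Hi Hj n). lra.
 - intros i Hi Hij. rewrite (prd_zero _ N j Hj). ring. destruct (Nat.eqb_spec j i). lia. ring. Qed.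

Lemma LemB a n e : (forall i, a i >= 1) ->
  (forall k, (k < n)%nat -> sm (fun j => e j / (INR k + a j)) (S n) = 0) ->
  exists lam, forall s, s > -1 -> sm (fun j => e j / (s + a j)) (S n) =
     lam * prd (fun k => s - INR k) n / prd (fun j => s + a j) (S n).
Proof. intros Ha H.
 set (R0 := fun s => prd (fun k => s - INR k) n).
 assert (HR : R0 (INR n) <> 0). { apply prd_nonzero. intros k Hk. assert (INR k < INR n) by (apply lt_INR; lia). lra. }
 set (lam := Qf a e (S n) (INR n) / R0 (INR n)).
 assert (HQ : forall x, Qf a e (S n) x - lam * R0 x = 0).
 { apply ispoly_roots with (S n).
   - apply ispoly_ext with (f := fun x => Qf a e (S n) x + (- lam) * R0 x). intros; ring.
     apply ispoly_plus. apply Qf_poly. apply (ispoly_scal (S n) (- lam)).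
     eapply ispoly_ext; [|apply (ispoly_prd (fun k => - INR k) n)]. intros x; apply prd_ext; intros; ring.
   - intros k Hk. destruct (Nat.eq_dec k n).
     + subst. unfold lam. field. auto.
     + rewrite Qf_eq. rewrite H by lia. unfold R0. rewrite (prd_zero _ n k) by (lia || ring). ring.
       intros i _. pose proof (pos_INR k). specialize (Ha i). lra. }
 exists lam. intros s Hs. assert (Hp : prd (fun j => s + a j) (S n) <> 0).
 { apply prd_nonzero. intros i _. specialize (Ha i). lra. }
 specialize (HQ s). rewrite Qf_eq in HQ. fold (R0 s). field_simplify_eq; auto. lra.
 intros i _. specialize (Ha i). lra. Qed.

Lemma is_RInt_plus' (f g : R -> R) a b If Ig : is_RInt f a b If -> is_RInt g a b Ig ->
  is_RInt (fun x => f x + g x) a b (If + Ig).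
Proof. intros Hf Hg. exact (is_RInt_plus f g a b If Ig Hf Hg). Qed.

Lemma is_RInt_ext' (f g : R -> R) a b (l : R) : (forall x, Rmin a b < x < Rmax a b -> f x = g x) ->
  is_RInt f a b l -> is_RInt g a b l.
Proof. intros H1 H2. exact (is_RInt_ext f g a b l H1 H2). Qed.

Lemma is_RInt_zero' a b : is_RInt (fun _ : R => 0) a b 0.
Proof. pose proof (@is_RInt_const R_NormedModule a b 0) as H.
 replace (scal (b - a) (0:R_NormedModule)) with 0 in H. exact H.
 unfold scal; simpl; unfold mult; simpl; ring. Qed.

Lemma rearr u v w z : u + v - (w + z) = (u - w) + (v - z).
Proof. ring. Qed.

Fixpoint prim (p : list R) (k : nat) (x : R) : R :=
  match p with nil => 0 | c :: p' => c * x ^ (S k) / INR (S k) + prim p' (S k) x end.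

Lemma prim_int p : forall k a b, is_RInt (fun x => peval p x * x ^ k) a b (prim p k b - prim p k a).
Proof. induction p as [|c p IH]; intros k a b; cbn [prim peval fold_right].
 - apply is_RInt_ext' with (fun _ => 0). intros; ring.
   replace (0 - 0) with 0 by ring. apply is_RInt_zero'.
 - rewrite rearr.
   apply is_RInt_ext' with (fun x => c * x ^ k + peval p x * x ^ S k). intros; unfold peval; simpl; ring.
   apply is_RInt_plus'; [|apply IH].
   assert (HS : INR (S k) <> 0) by (apply not_0_INR; lia).
   apply (is_RInt_derive (fun x => c * x ^ S k / INR (S k)) (fun x => c * x ^ k)).
   + intros y _. auto_derive; auto. change (match k with 0%nat => 1 | S _ => INR k + 1 end) with (INR (S k)). field. auto.
   + intros x _. apply (@ex_derive_continuous R_AbsRing R_NormedModule). auto_derive; auto.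
Qed.

Fixpoint primR (p : list R) (s : R) (x : R) : R :=
  match p with nil => 0 | c :: p' => c * Rpower x (s + 1) / (s + 1) + primR p' (s + 1) x end.

Lemma Rpower_S x s : 0 < x -> Rpower x (s + 1) = Rpower x s * x.
Proof. intros; rewrite Rpower_plus, Rpower_1; auto. Qed.

Lemma primR_int p : forall s e, s > -1 -> 0 < e -> e <= 1 ->
  is_RInt (fun x => peval p x * Rpower x s) e 1 (primR p s 1 - primR p s e).
Proof. induction p as [|c p IH]; intros s e Hs He He1; cbn [primR peval fold_right].
 - apply is_RInt_ext' with (fun _ => 0). intros; ring.
   replace (0 - 0) with 0 by ring. apply is_RInt_zero'.
 - rewrite rearr.
   apply is_RInt_ext' with (fun x => c * Rpower x s + peval p x * Rpower x (s + 1)).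
   { intros x Hx. rewrite Rmin_left, Rmax_right in Hx by lra. rewrite Rpower_S by lra. unfold peval; simpl; ring. }
   apply is_RInt_plus'; [|apply IH; lra].
   apply (is_RInt_derive (fun x => c * Rpower x (s + 1) / (s + 1)) (fun x => c * Rpower x s)).
   + intros x Hx. rewrite Rmin_left, Rmax_right in Hx by lra.
     pose proof (derivable_pt_lim_power x (s + 1) ltac:(lra)) as H.
     apply is_derive_Reals in H. apply (is_derive_scal _ _ (c / (s + 1))) in H.
     replace (c * Rpower x s) with (c / (s + 1) * ((s + 1) * Rpower x (s + 1 - 1))).
     eapply is_derive_ext; [|exact H]. intros t; simpl; field; lra.
     replace (s + 1 - 1) with s by ring. field. lra.
   + intros x Hx. rewrite Rmin_left, Rmax_right in Hx by lra. apply (@ex_derive_continuous R_AbsRing R_NormedModule).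
     pose proof (derivable_pt_lim_power x s ltac:(lra)) as H.
     apply is_derive_Reals in H. apply (is_derive_scal _ _ c) in H. eexists; exact H.
Qed.

Lemma Rpower_pos x y : 0 < Rpower x y.
Proof. unfold Rpower; apply exp_pos. Qed.

Lemma primR_bound p : forall s, s > -1 -> exists K, 0 <= K /\
  forall e, 0 < e <= 1 -> Rabs (primR p s e) <= K * Rpower e (s + 1).
Proof. induction p as [|c p IH]; intros s Hs; simpl.
 - exists 0; split; [lra|]. intros; rewrite Rabs_R0; lra.
 - destruct (IH (s + 1) ltac:(lra)) as [K [HK HB]].
   exists (Rabs c / (s + 1) + K); split. { apply Rplus_le_le_0_compat; auto. apply Rmult_le_pos. apply Rabs_pos. left; apply Rinv_0_lt_compat; lra. }
   intros e He. eapply Rle_trans; [apply Rabs_triang|].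
   pose proof (Rpower_pos e (s + 1)) as Hp.
   assert (H1 : Rabs (c * Rpower e (s + 1) / (s + 1)) = Rabs c / (s + 1) * Rpower e (s + 1)).
   { unfold Rdiv. rewrite !Rabs_mult, Rabs_inv, (Rabs_pos_eq (Rpower e (s + 1))), (Rabs_pos_eq (s + 1)) by lra. ring. }
   rewrite H1. specialize (HB e He). rewrite (Rpower_S e (s + 1)) in HB by lra.
   assert (K * (Rpower e (s + 1) * e) <= K * Rpower e (s + 1)).
   { apply Rmult_le_compat_l; auto. rewrite <- (Rmult_1_r (Rpower e (s + 1))) at 2. apply Rmult_le_compat_l; lra. }
   lra.
Qed.

Lemma Rpower_lt_base x y a : 0 < x -> x < y -> 0 < a -> Rpower x a < Rpower y a.
Proof. intros. unfold Rpower. apply exp_increasing. apply Rmult_lt_compat_l; auto. apply ln_increasing; auto. Qed.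

Lemma Rpower_base1 y : Rpower 1 y = 1.
Proof. unfold Rpower. rewrite ln_1, Rmult_0_r. apply exp_0. Qed.

Lemma improper p s : s > -1 -> ImproperIntegralIs (fun x => peval p x * Rpower x s) 0 1 (primR p s 1).
Proof. intros Hs. split.
 - intros e He. constructor. apply ex_RInt_Reals_0. eexists. apply primR_int; lra.
 - intros eps Heps. destruct (primR_bound p s Hs) as [K [HK HB]].
   set (delta := Rpower (eps / (K + 1)) (1 / (s + 1))).
   exists delta. split. apply Rpower_pos.
   intros e He He1 pr. rewrite <- RInt_Reals. rewrite (is_RInt_unique _ _ _ _ (primR_int p s e Hs ltac:(lra) He1)).
   replace (primR p s 1 - primR p s e - primR p s 1) with (- primR p s e) by ring. rewrite Rabs_Ropp.
   eapply Rle_lt_trans. apply HB; lra.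
   assert (Hd : Rpower delta (s + 1) = eps / (K + 1)).
   { unfold delta. rewrite Rpower_mult. replace (1 / (s + 1) * (s + 1)) with 1 by (field; lra).
     apply Rpower_1. apply Rdiv_lt_0_compat; lra. }
   assert (Hlt : Rpower e (s + 1) < eps / (K + 1)). { rewrite <- Hd. apply Rpower_lt_base; lra. }
   apply Rle_lt_trans with (K * (eps / (K + 1))). apply Rmult_le_compat_l; lra.
   apply Rmult_lt_reg_r with (K + 1). lra. replace (K * (eps / (K + 1)) * (K + 1)) with (K * eps) by (field; lra). nra.
Qed.

Lemma last_nth (l : list R) : l <> nil -> last l 0 = nth (length l - 1) l 0.
Proof. induction l as [|a l IH]; intros H. congruence. destruct l as [|b l]. reflexivity.
 change (last (a :: b :: l) 0) with (last (b :: l) 0). rewrite IH by congruence.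
 simpl. rewrite Nat.sub_0_r. reflexivity. Qed.

Definition cf (p : list R) (i : nat) := nth i p 0.
Definition sg (i : nat) := (-1) ^ i.
Lemma sg_even j : sg (2 * j) = 1. Proof. apply pow_1_even. Qed.
Lemma sg_odd j : sg (S (2 * j)) = -1. Proof. apply pow_1_odd. Qed.
Lemma sg_sq i : sg i * sg i = 1.
Proof. unfold sg. rewrite <- pow_add. replace (i + i)%nat with (2 * i)%nat by lia. apply pow_1_even. Qed.

Lemma primR1 p : forall s, primR p s 1 = sm (fun i => cf p i / (s + INR i + 1)) (length p).
Proof. induction p as [|c p IH]; intros s. reflexivity.
 change (length (c :: p)) with (S (length p)). rewrite sm_shift. cbn [primR]. rewrite IH, Rpower_base1.
 unfold cf. simpl nth. rewrite Rmult_1_r. f_equal. { simpl INR. f_equal. ring. }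
 apply sm_ext. intros i _. rewrite S_INR. f_equal. ring. Qed.

Lemma prim_gen p : forall k x, prim p k x = sm (fun i => cf p i * x ^ (i + k + 1) / INR (i + k + 1)) (length p).
Proof. induction p as [|c p IH]; intros k x. reflexivity.
 change (length (c :: p)) with (S (length p)). rewrite sm_shift. cbn [prim]. rewrite IH.
 unfold cf; simpl nth. f_equal. replace (0 + k + 1)%nat with (S k) by lia. reflexivity.
 apply sm_ext. intros i _. replace (i + S k + 1)%nat with (S i + k + 1)%nat by lia. reflexivity. Qed.

Lemma cond01 p k : IntegralIs (fun x => peval p x * x ^ k) 0 1 0 ->
  sm (fun i => cf p i / (INR k + INR i + 1)) (length p) = 0.
Proof. intros [pr Hpr]. rewrite <- RInt_Reals, (is_RInt_unique _ _ _ _ (prim_int p k 0 1)) in Hpr.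
 rewrite !prim_gen in Hpr. rewrite (sm_zero (fun i => cf p i * 0 ^ (i + k + 1) / INR (i + k + 1))) in Hpr.
 2:{ intros i _. rewrite pow_i by lia. unfold Rdiv; ring. }
 rewrite <- Hpr. rewrite Rminus_0_r. apply sm_ext. intros i _. rewrite pow1.
 rewrite !plus_INR. simpl (INR 1). f_equal; ring. Qed.

Lemma condm10 p k : IntegralIs (fun x => peval p x * x ^ k) (-1) 0 0 ->
  sm (fun i => sg i * cf p i / (INR k + INR i + 1)) (length p) = 0.
Proof. intros [pr Hpr]. rewrite <- RInt_Reals, (is_RInt_unique _ _ _ _ (prim_int p k (-1) 0)) in Hpr.
 rewrite !prim_gen in Hpr. rewrite (sm_zero (fun i => cf p i * 0 ^ (i + k + 1) / INR (i + k + 1))) in Hpr.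
 2:{ intros i _. rewrite pow_i by lia. unfold Rdiv; ring. }
 rewrite (sm_ext _ (fun i => sg i * cf p i / (INR k + INR i + 1) * (-1) ^ (k + 1))) in Hpr.
 2:{ intros i _. unfold sg. rewrite !pow_add, !plus_INR. simpl (INR 1). rewrite (Rplus_comm (INR i) (INR k)). unfold Rdiv. ring. }
 rewrite sm_mult_r in Hpr. assert (Hn : (-1) ^ (k + 1) <> 0) by (apply pow_nonzero; lra).
 assert (Hz : sm (fun i => sg i * cf p i / (INR k + INR i + 1)) (length p) * (-1) ^ (k + 1) = 0) by lra.
 apply Rmult_integral in Hz. destruct Hz as [H|H]; [auto|contradiction]. Qed.

Definition LAc (n m : nat) (c : nat -> R) :=
  (forall i, (n + m < i)%nat -> c i = 0) /\ c (n + m)%nat = 1 /\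
  (forall k, (k < n)%nat -> sm (fun i => sg i * c i / (INR k + INR i + 1)) (n + m + 1) = 0) /\
  (forall k, (k < m)%nat -> sm (fun i => c i / (INR k + INR i + 1)) (n + m + 1) = 0).

Lemma LA_LAc n m p : is_LA n m p -> LAc n m (cf p).
Proof. intros [Hl [Hlast [H1 H2]]]. split; [|split; [|split]].
 - intros i Hi. unfold cf. apply nth_overflow. lia.
 - rewrite last_nth in Hlast. rewrite Hl in Hlast. replace (n + m + 1 - 1)%nat with (n + m)%nat in Hlast by lia. exact Hlast.
   intros E; rewrite E in Hl; simpl in Hl; lia.
 - intros k Hk. rewrite <- Hl. apply condm10. apply H1; auto.
 - intros k Hk. rewrite <- Hl. apply cond01. apply H2; auto.
Qed.

Lemma reduce_even d M s : (forall j, d (S (2 * j)) = 0) ->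
  sm (fun i => d i / (s + INR i + 1)) (2 * M) = sm (fun j => d (2 * j)%nat / (s + (0 + 2 * INR j + 1))) M.
Proof. intros Hd. rewrite sm_split2. rewrite (sm_zero (fun j => d (S (2 * j)) / (s + INR (S (2 * j)) + 1))).
 rewrite Rplus_0_r. apply sm_ext. intros j _. rewrite mult_INR. simpl (INR 2). f_equal. ring.
 intros j _. rewrite Hd. unfold Rdiv; ring. Qed.

Lemma reduce_odd d M s : (forall j, d (2 * j)%nat = 0) ->
  sm (fun i => d i / (s + INR i + 1)) (2 * M) = sm (fun j => d (S (2 * j)) / (s + (1 + 2 * INR j + 1))) M.
Proof. intros Hd. rewrite sm_split2. rewrite (sm_zero (fun j => d (2 * j)%nat / (s + INR (2 * j) + 1))).
 rewrite Rplus_0_l. apply sm_ext. intros j _. rewrite S_INR, mult_INR. simpl (INR 2). f_equal. ring.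
 intros j _. rewrite Hd. unfold Rdiv; ring. Qed.

Lemma a_ok (b : R) : 0 <= b -> (forall i, b + 2 * INR i + 1 >= 1) /\
  (forall i j, (i < 0 + i + 1)%nat -> i <> j -> b + 2 * INR i + 1 <> b + 2 * INR j + 1).
Proof. intros Hb. split. intros i; pose proof (pos_INR i); lra.
 intros i j _ Hij E. apply Hij. apply INR_eq. lra. Qed.

Lemma parity i : exists j, i = (2 * j)%nat \/ i = S (2 * j).
Proof. destruct (Nat.Even_or_Odd i) as [[j Hj]|[j Hj]]; exists j; lia. Qed.

Lemma kill_even N d : (forall j, d (S (2 * j)) = 0) -> (forall i, (2 * N <= i)%nat -> d i = 0) ->
  (forall k, (k < N)%nat -> sm (fun i => d i / (INR k + INR i + 1)) (2 * N) = 0) -> forall i, d i = 0.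
Proof. intros Ho Hb Hs.
 assert (He : forall j, (j < N)%nat -> d (2 * j)%nat = 0).
 { apply (LemA (fun j => 0 + 2 * INR j + 1) N (fun j => d (2 * j)%nat)).
   - intros i; pose proof (pos_INR i); lra.
   - intros i j _ _ Hij E. apply Hij. apply INR_eq. lra.
   - intros k Hk. rewrite <- reduce_even; auto. }
 intros i. destruct (parity i) as [j [->| ->]]; auto.
 destruct (Nat.lt_ge_cases j N). auto. apply Hb; lia. Qed.

Lemma kill_odd N d : (forall j, d (2 * j)%nat = 0) -> (forall i, (2 * N <= i)%nat -> d i = 0) ->
  (forall k, (k < N)%nat -> sm (fun i => d i / (INR k + INR i + 1)) (2 * N) = 0) -> forall i, d i = 0.
Proof. intros Ho Hb Hs.
 assert (He : forall j, (j < N)%nat -> d (S (2 * j)) = 0).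
 { apply (LemA (fun j => 1 + 2 * INR j + 1) N (fun j => d (S (2 * j)))).
   - intros i; pose proof (pos_INR i); lra.
   - intros i j _ _ Hij E. apply Hij. apply INR_eq. lra.
   - intros k Hk. rewrite <- reduce_odd; auto. }
 intros i. destruct (parity i) as [j [->| ->]]; auto.
 destruct (Nat.lt_ge_cases j N). auto. apply Hb; lia. Qed.

Lemma form_even n d : (forall j, d (S (2 * j)) = 0) ->
  (forall k, (k < n)%nat -> sm (fun i => d i / (INR k + INR i + 1)) (2 * S n) = 0) ->
  exists lam, forall s, s > -1 -> sm (fun i => d i / (s + INR i + 1)) (2 * S n) =
    lam * prd (fun k => s - INR k) n / prd (fun j => s + (0 + 2 * INR j + 1)) (S n).
Proof. intros Ho Hs. destruct (LemB (fun j => 0 + 2 * INR j + 1) n (fun j => d (2 * j)%nat)) as [lam Hl].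
 - intros i; pose proof (pos_INR i); lra.
 - intros k Hk. rewrite <- reduce_even; auto.
 - exists lam. intros s Hs'. rewrite reduce_even by auto. apply Hl; auto. Qed.

Lemma form_odd n d : (forall j, d (2 * j)%nat = 0) ->
  (forall k, (k < n)%nat -> sm (fun i => d i / (INR k + INR i + 1)) (2 * S n) = 0) ->
  exists lam, forall s, s > -1 -> sm (fun i => d i / (s + INR i + 1)) (2 * S n) =
    lam * prd (fun k => s - INR k) n / prd (fun j => s + (1 + 2 * INR j + 1)) (S n).
Proof. intros Ho Hs. destruct (LemB (fun j => 1 + 2 * INR j + 1) n (fun j => d (S (2 * j)))) as [lam Hl].
 - intros i; pose proof (pos_INR i); lra.
 - intros k Hk. rewrite <- reduce_odd; auto.
 - exists lam. intros s Hs'. rewrite reduce_odd by auto. apply Hl; auto. Qed.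

Lemma part1_odd n c : LAc n n c -> forall j, c (S (2 * j)) = 0.
Proof. intros [Hb [Ht [H1 H2]]].
 set (o := fun i => c i - sg i * c i).
 assert (Ho : forall i, o i = 0).
 { apply (kill_odd n).
   - intros j. unfold o. rewrite sg_even. ring.
   - intros i Hi. unfold o. destruct (Nat.eq_dec i (2 * n)). subst. rewrite sg_even; ring.
     rewrite Hb by lia. ring.
   - intros k Hk. rewrite <- (sm_extend _ (2 * n) (n + n + 1)) by (first [lia | intros i Hi;
       unfold o; destruct (Nat.eq_dec i (2 * n)); [subst; rewrite sg_even; unfold Rdiv; ring|rewrite Hb by lia; unfold Rdiv; ring]]).
     rewrite (sm_ext _ (fun i => c i / (INR k + INR i + 1) - sg i * c i / (INR k + INR i + 1))).
     rewrite sm_minus, H1, H2 by auto. ring. intros; unfold o, Rdiv; ring. }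
 intros j. specialize (Ho (S (2 * j))). unfold o in Ho. rewrite sg_odd in Ho. lra. Qed.

Lemma part1_uniq n c c' : LAc n n c -> LAc n n c' -> forall i, c i = c' i.
Proof. intros HA HA'. pose proof (part1_odd n c HA) as Oc. pose proof (part1_odd n c' HA') as Oc'.
 destruct HA as [Hb [Ht [H1 H2]]]. destruct HA' as [Hb' [Ht' [H1' H2']]].
 set (d := fun i => c i - c' i).
 assert (Hd : forall i, d i = 0).
 { apply (kill_even n).
   - intros j. unfold d. rewrite Oc, Oc'. ring.
   - intros i Hi. unfold d. destruct (Nat.eq_dec i (2 * n)). subst. replace (2 * n)%nat with (n + n)%nat by lia. rewrite Ht, Ht'. ring.
     rewrite Hb, Hb' by lia. ring.
   - intros k Hk. rewrite <- (sm_extend _ (2 * n) (n + n + 1)) by (first [lia | intros i Hi;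
       unfold d; destruct (Nat.eq_dec i (2 * n)); [subst; replace (2 * n)%nat with (n + n)%nat by lia; rewrite Ht, Ht'; unfold Rdiv; ring|rewrite Hb, Hb' by lia; unfold Rdiv; ring]]).
     rewrite (sm_ext _ (fun i => c i / (INR k + INR i + 1) - c' i / (INR k + INR i + 1))).
     rewrite sm_minus, H2, H2' by auto. ring. intros; unfold d, Rdiv; ring. }
 intros i. specialize (Hd i). unfold d in Hd. lra. Qed.

Lemma part1_form n c : LAc n n c -> exists lam, forall s, s > -1 ->
  sm (fun i => c i / (s + INR i + 1)) (n + n + 1) =
    lam * prd (fun k => s - INR k) n / prd (fun j => s + (0 + 2 * INR j + 1)) (S n).
Proof. intros HA. pose proof (part1_odd n c HA) as Oc. destruct HA as [Hb [Ht [H1 H2]]].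
 assert (Hext : forall s, sm (fun i => c i / (s + INR i + 1)) (n + n + 1) = sm (fun i => c i / (s + INR i + 1)) (2 * S n)).
 { intros s. symmetry. apply sm_extend. lia. intros i Hi. rewrite Hb by lia. unfold Rdiv; ring. }
 destruct (form_even n c Oc) as [lam Hl].
 - intros k Hk. rewrite <- Hext. apply H2; auto.
 - exists lam. intros s Hs. rewrite Hext. apply Hl; auto. Qed.

Lemma part2_rel n c e : LAc (S n) n c -> LAc n (S n) e -> forall i, c i = - sg i * e i.
Proof. intros [Hb [Ht [H1 H2]]] [Hb' [Ht' [H1' H2']]].
 replace (S n + n + 1)%nat with (2 * S n)%nat in H1, H2 by lia.
 replace (n + S n + 1)%nat with (2 * S n)%nat in H1', H2' by lia.
 replace (S n + n)%nat with (S (2 * n)) in Hb, Ht by lia.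
 replace (n + S n)%nat with (S (2 * n)) in Hb', Ht' by lia.
 set (d := fun i => c i + sg i * e i).
 assert (Hdb : forall i, (S (2 * n) <= i)%nat -> d i = 0).
 { intros i Hi. unfold d. destruct (Nat.eq_dec i (S (2 * n))). subst. rewrite Ht, Ht', sg_odd. ring.
   rewrite Hb, Hb' by lia. ring. }
 assert (Sd : forall k, sm (fun i => d i / (INR k + INR i + 1)) (2 * S n) =
    sm (fun i => c i / (INR k + INR i + 1)) (2 * S n) + sm (fun i => sg i * e i / (INR k + INR i + 1)) (2 * S n)).
 { intros k. rewrite <- sm_plus. apply sm_ext. intros; unfold d, Rdiv; ring. }
 assert (Ssd : forall k, sm (fun i => sg i * d i / (INR k + INR i + 1)) (2 * S n) =
    sm (fun i => sg i * c i / (INR k + INR i + 1)) (2 * S n) + sm (fun i => e i / (INR k + INR i + 1)) (2 * S n)).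
 { intros k. rewrite <- sm_plus. apply sm_ext. intros i _. unfold d.
   transitivity (sg i * c i / (INR k + INR i + 1) + (sg i * sg i) * e i / (INR k + INR i + 1)). unfold Rdiv; ring. rewrite sg_sq; unfold Rdiv; ring. }
 set (o := fun i => d i - sg i * d i).
 assert (Ho : forall i, o i = 0).
 { apply (kill_odd n).
   - intros j. unfold o. rewrite sg_even. ring.
   - intros i Hi. unfold o. destruct (Nat.eq_dec i (2 * n)). subst. rewrite sg_even; ring.
     rewrite Hdb by lia. ring.
   - intros k Hk. rewrite <- (sm_extend _ (2 * n) (2 * S n)) by (first [lia | intros i Hi;
       unfold o; destruct (Nat.eq_dec i (2 * n)); [subst; rewrite sg_even; unfold Rdiv; ring|rewrite Hdb by lia; unfold Rdiv; ring]]).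
     rewrite (sm_ext _ (fun i => d i / (INR k + INR i + 1) - sg i * d i / (INR k + INR i + 1))).
     rewrite sm_minus, Sd, Ssd, H1, H2, H1', H2' by lia. ring. intros; unfold o, Rdiv; ring. }
 assert (Od : forall j, d (S (2 * j)) = 0).
 { intros j. specialize (Ho (S (2 * j))). unfold o in Ho. rewrite sg_odd in Ho. lra. }
 assert (Hd : forall i, d i = 0).
 { apply (kill_even (S n)); auto.
   - intros i Hi. apply Hdb. lia.
   - intros k Hk. rewrite (sm_ext _ (fun i => sg i * d i / (INR k + INR i + 1))).
     rewrite Ssd, H1, H2' by lia. ring.
     intros i _. destruct (parity i) as [j [->| ->]]. rewrite sg_even; unfold Rdiv; ring. rewrite Od; unfold Rdiv; ring. }
 intros i. specialize (Hd i). unfold d in Hd. lra. Qed.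

Lemma part2_form n c e : LAc (S n) n c -> LAc n (S n) e -> exists lam, forall s, s > -1 ->
  sm (fun i => (c i + e i) / (s + INR i + 1)) (2 * S n) =
    lam * prd (fun k => s - INR k) n / prd (fun j => s + (1 + 2 * INR j + 1)) (S n).
Proof. intros HA HB. pose proof (part2_rel n c e HA HB) as Hr.
 destruct HA as [Hb [Ht [H1 H2]]]. destruct HB as [Hb' [Ht' [H1' H2']]].
 replace (S n + n + 1)%nat with (2 * S n)%nat in H1, H2 by lia.
 replace (n + S n + 1)%nat with (2 * S n)%nat in H1', H2' by lia.
 apply form_odd.
 - intros j. rewrite Hr, sg_even. ring.
 - intros k Hk. rewrite (sm_ext _ (fun i => c i / (INR k + INR i + 1) + e i / (INR k + INR i + 1))).
   rewrite sm_plus, H2, H2' by lia. ring. intros; unfold Rdiv; ring. Qed.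

Lemma poch_neg s n : poch (- s) n = (-1) ^ n * prd (fun k => s - INR k) n.
Proof. induction n; simpl. ring. rewrite IHn. ring. Qed.

Lemma poch_half s m : poch (1 / 2 + s / 2) m = prd (fun j => s + (0 + 2 * INR j + 1)) m / 2 ^ m.
Proof. induction m; simpl. field. rewrite IHm. field. apply pow_nonzero; lra. Qed.

Lemma poch_one s m : poch (1 + s / 2) m = prd (fun j => s + (1 + 2 * INR j + 1)) m / 2 ^ m.
Proof. induction m; simpl. field. rewrite IHm. field. apply pow_nonzero; lra. Qed.

Lemma primR_ladd u : forall v s x, primR (ladd u v) s x = primR u s x + primR v s x.
Proof. induction u as [|a u IH]; intros [|b v] s x; simpl; try ring. rewrite IH. unfold Rdiv; ring. Qed.

Lemma fin_eq lam n P Q : Q <> 0 ->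
  lam * P / Q = lam * (-1) ^ n / 2 ^ S n * ((-1) ^ n * P) / (Q / 2 ^ S n).
Proof. intros HQ. assert (H2 : 2 ^ S n <> 0) by (apply pow_nonzero; lra).
 transitivity (lam * ((-1) ^ n * (-1) ^ n) * P / Q). change ((-1) ^ n * (-1) ^ n) with (sg n * sg n).
 rewrite sg_sq. field. auto. field. auto. Qed.

Lemma main1 n : exists C, forall s, s > -1 -> forall p, is_LA n n p ->
  ImproperIntegralIs (fun x => peval p x * Rpower x s) 0 1 (C * poch (- s) n / poch (1 / 2 + s / 2) (S n)).
Proof. destruct (classic (exists p, is_LA n n p)) as [[p0 Hp0]|Hno].
 - destruct (part1_form n (cf p0) (LA_LAc _ _ _ Hp0)) as [lam Hl].
   exists (lam * (-1) ^ n / 2 ^ S n). intros s Hs p Hp.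
   pose proof (improper p s Hs) as HI. rewrite primR1 in HI.
   pose proof (part1_uniq n _ _ (LA_LAc _ _ _ Hp) (LA_LAc _ _ _ Hp0)) as Hu.
   destruct Hp as [Hl0 _]. rewrite Hl0 in HI.
   rewrite (sm_ext _ (fun i => cf p0 i / (s + INR i + 1))) in HI by (intros; rewrite Hu; auto).
   rewrite Hl in HI by auto. rewrite poch_neg, poch_half. rewrite <- fin_eq. exact HI.
   apply prd_nonzero. intros i _. pose proof (pos_INR i). lra.
 - exists 0. intros s Hs p Hp. exfalso. apply Hno. exists p; auto. Qed.

Lemma main2 n : exists D, forall s, s > -1 -> forall p q, is_LA (S n) n p -> is_LA n (S n) q ->
  ImproperIntegralIs (fun x => (peval p x + peval q x) * Rpower x s) 0 1 (D * poch (- s) n / poch (1 + s / 2) (S n)).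
Proof. destruct (classic (exists p q, is_LA (S n) n p /\ is_LA n (S n) q)) as [[p0 [q0 [Hp0 Hq0]]]|Hno].
 - destruct (part2_form n (cf p0) (cf q0) (LA_LAc _ _ _ Hp0) (LA_LAc _ _ _ Hq0)) as [lam Hl].
   exists (lam * (-1) ^ n / 2 ^ S n). intros s Hs p q Hp Hq.
   assert (Hpp : forall i, cf p i = cf p0 i).
   { intros i. rewrite (part2_rel n _ _ (LA_LAc _ _ _ Hp) (LA_LAc _ _ _ Hq0)).
     rewrite (part2_rel n _ _ (LA_LAc _ _ _ Hp0) (LA_LAc _ _ _ Hq0)). auto. }
   assert (Hqq : forall i, cf q i = cf q0 i).
   { intros i. pose proof (part2_rel n _ _ (LA_LAc _ _ _ Hp0) (LA_LAc _ _ _ Hq) i) as E1.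
     pose proof (part2_rel n _ _ (LA_LAc _ _ _ Hp0) (LA_LAc _ _ _ Hq0) i) as E2.
     pose proof (sg_sq i) as E3.
     transitivity (sg i * sg i * cf q i). rewrite E3; ring.
     transitivity (sg i * sg i * cf q0 i). 2:{ rewrite E3; ring. }
     assert (sg i * cf q i = sg i * cf q0 i) by lra. rewrite !Rmult_assoc, H. auto. }
   replace (fun x => (peval p x + peval q x) * Rpower x s) with (fun x => peval (ladd p q) x * Rpower x s)
     by (apply functional_extensionality; intros x; rewrite ladd_eval; auto).
   pose proof (improper (ladd p q) s Hs) as HI. rewrite primR_ladd, !primR1 in HI.
   destruct Hp as [Hlp _]. destruct Hq as [Hlq _]. rewrite Hlp, Hlq in HI.
   replace (S n + n + 1)%nat with (2 * S n)%nat in HI by lia.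
   replace (n + S n + 1)%nat with (2 * S n)%nat in HI by lia.
   rewrite <- sm_plus in HI.
   rewrite (sm_ext _ (fun i => (cf p0 i + cf q0 i) / (s + INR i + 1))) in HI
     by (intros; rewrite Hpp, Hqq; unfold Rdiv; ring).
   rewrite Hl in HI by auto. rewrite poch_neg, poch_one. rewrite <- fin_eq. exact HI.
   apply prd_nonzero. intros i _. pose proof (pos_INR i). lra.
 - exists 0. intros s Hs p q Hp Hq. exfalso. apply Hno. exists p, q; auto. Qed.

Theorem mainTheorem10 :
  forall n : nat, exists Cn Dn : R,
    forall s : R, s > -1 ->
      (forall p : list R, is_LA n n p ->
         ImproperIntegralIs (fun x => peval p x * Rpower x s) 0 1
           (Cn * poch (- s) n / poch (1/2 + s/2) (S n))) /\
      (forall p q : list R, is_LA (S n) n p -> is_LA n (S n) q ->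
         ImproperIntegralIs (fun x => (peval p x + peval q x) * Rpower x s) 0 1
           (Dn * poch (- s) n / poch (1 + s/2) (S n))).
Proof. intros n. destruct (main1 n) as [C HC]. destruct (main2 n) as [D HD].
 exists C, D. intros s Hs. split; intros; [apply HC|apply HD]; auto. Qed.
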